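(* Let $X$ be a separable infinite-dimensional Banach space over $\mathbb{K}\in\{\mathbb{R},\mathbb{C}\}$ and let $T_1,\dots,T_N\in B(X)$ with $N\ge 2$. Suppose there exist a strictly increasing sequence $(n_k)$ of positive integers, a dense subset $X_0$ of $X$, and maps $S_k:\oplus_{i=1}^N X_0\to X$ ($k\in\mathbb{N}$) such that: (i) for each $x\in X_0$ and each $1\le i\le N$, $T_i^{n_k}x\to 0$ as $k\to\infty$; (ii) for each $\epsilon>0$, each $K\in\mathbb{N}$ and all $x_1,\dots,x_N\in X_0$ there exists $k\ge K$ with (a) $\|S_k(x_1,\dots,x_N)\|<\epsilon$ and (b) $\|T_i^{n_k}S_k(x_1,\dots,x_N)-x_i\|<\epsilon$ for all $1\le i\le N$. Then $T_1,\dots,T_N$ satisfy the Strong Disjoint Blow-up/Collapse Property, and hence $T_1,\dots,T_N$ possess a dense d-hypercyclic manifold.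
   Context: $B(X)$ is the algebra of bounded linear operators on $X$. Operators $T_1,\dots,T_N$ satisfy the Strong Disjoint Blow-up/Collapse Property if for every $L\in\mathbb{N}$ and all non-empty open sets $W,U_{1-L},\dots,U_0,U_1,\dots,U_N$ of $X$ with $0\in W$ there is $n\in\mathbb{N}$ with $W\cap T_1^{-n}(U_1)\cap\cdots\cap T_N^{-n}(U_N)\ne\emptyset$ and $U_\ell\cap T_1^{-n}(W)\cap\cdots\cap T_N^{-n}(W)\neq\emptyset$ for all $1-L\le \ell\le 0$. A vector $x\in X$ is d-hypercyclic for $T_1,\dots,T_N$ if $\{(T_1^nx,\dots,T_N^nx):n\ge0\}$ is dense in $\oplus_{i=1}^N X$ (product topology). A dense d-hypercyclic manifold is a dense linear subspace of $X$ every nonzero vector of which is d-hypercyclic for $T_1,\dots,T_N$. *)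

(* Defs.v *)
From HB Require Import structures.
From mathcomp Require Import all_boot all_order all_algebra.
From mathcomp Require Import all_classical all_reals all_analysis.
From mathcomp Require Import complex.
Set Implicit Arguments. Unset Strict Implicit. Unset Printing Implicit Defensive.
Import Order.TTheory GRing.Theory Num.Theory.
Import numFieldNormedType.Exports.
Local Open Scope classical_set_scope.
Local Open Scope ring_scope.

Section Defs.
Variables (K : numFieldType) (X : normedModType K).

Definition separable_space : Prop :=
  exists D : set X, countable D /\ dense D.

Definition finite_dimensional : Prop :=
  exists s : seq X, forall x : X,
    exists c : 'I_(size s) -> K, x = \sum_(j < size s) c j *: s`_j.

Definition infinite_dimensional : Prop := ~ finite_dimensional.

Definition bounded_operator (T : X -> X) : Prop :=
  linear T /\ exists M : K, forall x : X, `|T x| <= M * `|x|.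

Definition opow (T : X -> X) (n : nat) : X -> X := iter n T.

(* Strong Disjoint Blow-up/Collapse Property for T_1..T_N (indexed by 'I_N);
   the sets U_{1-L},...,U_0 are indexed by 'I_L. *)
Definition strong_disjoint_blowup_collapse (N : nat) (T : 'I_N -> X -> X) : Prop :=
  forall (L : nat), (0 < L)%N ->
  forall (W : set X) (V : 'I_L -> set X) (U : 'I_N -> set X),
    open W -> W !=set0 -> W 0 ->
    (forall l, open (V l) /\ V l !=set0) ->
    (forall i, open (U i) /\ U i !=set0) ->
    exists n : nat, (0 < n)%N /\
      (exists x, W x /\ forall i, U i (opow (T i) n x)) /\
      (forall l, exists y, V l y /\ forall i, W (opow (T i) n y)).

Definition d_hypercyclic (N : nat) (T : 'I_N -> X -> X) (x : X) : Prop :=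
  dense (range (fun n : nat => (fun i : 'I_N => opow (T i) n x))
          : set {ptws 'I_N -> X}).

Definition linear_subspace (M : set X) : Prop :=
  M 0 /\ (forall x y, M x -> M y -> M (x + y)) /\
  (forall (a : K) x, M x -> M (a *: x)).

Definition dense_d_hypercyclic_manifold (N : nat) (T : 'I_N -> X -> X)
    (M : set X) : Prop :=
  linear_subspace M /\ dense M /\
  (forall x, M x -> x != 0 -> d_hypercyclic T x).

End Defs.

Definition theorem2p2_over (K : numFieldType) : Prop :=
  forall (X : completeNormedModType K),
  separable_space X -> infinite_dimensional X ->
  forall (N : nat) (T : 'I_N -> X -> X),
  (2 <= N)%N ->
  (forall i, bounded_operator (T i)) ->
  forall (nk : nat -> nat) (X0 : set X) (S : nat -> ('I_N -> X) -> X),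
  (forall k, (0 < nk k)%N) ->
  (forall k, (nk k < nk k.+1)%N) ->
  dense X0 ->
  (forall x, X0 x -> forall i : 'I_N,
      (fun k => opow (T i) (nk k) x) @ \oo --> (0 : X)) ->
  (forall (eps : K), 0 < eps -> forall K0 : nat,
     forall xs : 'I_N -> X, (forall i, X0 (xs i)) ->
     exists k : nat, (K0 <= k)%N /\
       `|S k xs| < eps /\
       (forall i : 'I_N, `|opow (T i) (nk k) (S k xs) - xs i| < eps)) ->
  strong_disjoint_blowup_collapse T /\
  exists M : set X, dense_d_hypercyclic_manifold T M.

(* Main.v *)
From HB Require Import structures.
Require Import Defs.
From mathcomp Require Import all_boot all_order all_algebra.
From mathcomp Require Import all_classical all_reals all_analysis.
From mathcomp Require Import complex.
From mathcomp Require Import ring.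
Set Implicit Arguments. Unset Strict Implicit. Unset Printing Implicit Defensive.
Import Order.TTheory GRing.Theory Num.Theory.
Import numFieldNormedType.Exports.
Local Open Scope classical_set_scope.
Local Open Scope ring_scope.

HB.instance Definition _ (n : nat) := hasNbhs.Build 'I_n principal_filter.
HB.instance Definition _ (n : nat) := Discrete_ofNbhs.Build 'I_n erefl.

Section Ops.
Context {K : numFieldType} {X : normedModType K}.
Implicit Types (T : X -> X).

Lemma lin0 T : linear T -> T 0 = 0.
Proof.
move=> hT; have h := hT 1 0 0; rewrite !scale1r addr0 in h.
by apply: (@addrI _ (T 0)); rewrite addr0 -h.
Qed.

Lemma linD T : linear T -> forall x y, T (x + y) = T x + T y.
Proof. by move=> hT x y; have := hT 1 x y; rewrite !scale1r. Qed.

Lemma linZ T : linear T -> forall a x, T (a *: x) = a *: T x.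
Proof. by move=> hT a x; have := hT a x 0; rewrite !addr0 lin0 // addr0. Qed.

Lemma opow_lin T n : linear T -> linear (opow T n).
Proof.
move=> hT; elim: n => [//|n IH] a u v /=.
by rewrite /opow /= -/(opow T n) IH hT.
Qed.

Lemma opowS T n x : opow T n.+1 x = T (opow T n x).
Proof. by []. Qed.

Lemma opow_sum T n (p : nat) (a : nat -> K) (u : nat -> X) : linear T ->
  opow T n (\sum_(m < p) a m *: u m) = \sum_(m < p) a m *: opow T n (u m).
Proof.
move=> hT; have hL := opow_lin n hT.
rewrite (big_morph (opow T n) (linD hL) (lin0 hL)).
by apply: eq_bigr => m _; rewrite linZ.
Qed.

Lemma opow_bound T (B : K) : 0 <= B -> (forall x, `|T x| <= B * `|x|) ->
  forall n x, `|opow T n x| <= B ^+ n * `|x|.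
Proof.
move=> hB hT; elim=> [|n IH] x; first by rewrite expr0 mul1r.
rewrite opowS (le_trans (hT _)) // exprS -mulrA ler_wpM2l //.
Qed.

End Ops.

Lemma ev_seq (A : eqType) (s : seq A) (P : A -> nat -> Prop) :
  (forall a, a \in s -> exists K0, forall k, (K0 <= k)%N -> P a k) ->
  exists K0, forall a, a \in s -> forall k, (K0 <= k)%N -> P a k.
Proof.
elim: s => [|b s IH] h; first by exists 0%N.
have [K1 h1] := h b (mem_head _ _).
have [K2 h2] : exists K0, forall a, a \in s -> forall k, (K0 <= k)%N -> P a k.
  by apply: IH => a ha; apply: h; rewrite inE ha orbT.
exists (maxn K1 K2) => a; rewrite inE => /orP[/eqP -> | ha] k hk.
  by apply: h1; apply: leq_trans hk; apply: leq_maxl.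
by apply: h2 => //; apply: leq_trans hk; apply: leq_maxr.
Qed.

Lemma minpos (K : numFieldType) (a b : K) : 0 < a -> 0 < b ->
  exists c, [/\ 0 < c, c <= a & c <= b].
Proof.
move=> ha hb; exists (a * b / (a + b)).
have hab : 0 < a + b by rewrite addr_gt0.
split; first by rewrite divr_gt0 // mulr_gt0.
  by rewrite ler_pdivrMr // ler_pM2l // lerDr ltW.
by rewrite ler_pdivrMr // mulrC ler_pM2l // lerDl ltW.
Qed.

Definition archK (K : numFieldType) := forall eps : K, 0 < eps -> exists n : nat, n.+1%:R^-1 < eps.

Lemma pow2_small (K : numFieldType) : archK K -> forall eps : K, 0 < eps ->
  exists j : nat, (2 ^+ j)^-1 < eps.
Proof.
move=> ha eps he; have [n hn] := ha eps he; exists n.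
apply: le_lt_trans hn; rewrite lef_pV2 ?posrE ?exprn_gt0 ?ltr0n //.
by rewrite -natrX ler_nat ltn_expl.
Qed.



Lemma arch_real (R : realType) : archK R.
Proof.
move=> eps he; exists (Num.truncn eps^-1).
rewrite invf_plt ?posrE ?ltr0Sn //.
exact: archimedean.Num.Theory.truncnS_gt.
Qed.

Lemma arch_cplx (R : realType) : archK (R[i])%C.
Proof.
case=> a b; rewrite ltcE /= => /andP[/eqP hb ha].
have [n hn] := arch_real ha; exists n.
rewrite ltcE /=.
have -> : (n.+1%:R : R[i])^-1 = ((n.+1%:R : R)^-1)%:C%C.
  by rewrite fmorphV rmorph_nat.
by rewrite /= hb eqxx hn.
Qed.


Section Construction.
Variables (K : numFieldType) (X : completeNormedModType K) (N : nat) (T : 'I_N -> X -> X) (B : K).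
Hypotheses (hB1 : 1 <= B) (hTB : forall i x, `|T i x| <= B * `|x|) (hlin : forall i, linear (T i)).
Variables (nk : nat -> nat) (X0 : set X) (S : nat -> ('I_N -> X) -> X).
Hypotheses (hX0 : dense X0).

Definition Z x := forall i eps, 0 < eps -> exists K0, forall k, (K0 <= k)%N ->
  `|opow (T i) (nk k) x| < eps.

Hypothesis hZ0 : forall x, X0 x -> Z x.
Hypothesis hii : forall (eps : K), 0 < eps -> forall K0 : nat,
     forall xs : 'I_N -> X, (forall i, X0 (xs i)) ->
     exists k : nat, (K0 <= k)%N /\
       `|S k xs| < eps /\
       (forall i : 'I_N, `|opow (T i) (nk k) (S k xs) - xs i| < eps).
Variables (e : nat -> X).
Hypotheses (he0 : forall a, X0 (e a)).

Lemma hB0 : 0 < B. Proof. exact: lt_le_trans ltr01 hB1. Qed.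
Lemma hBn n : 0 < B ^+ n. Proof. exact: exprn_gt0 hB0. Qed.
Lemma hBn1 n : 1 <= B ^+ n. Proof. exact: exprn_ege1 hB1. Qed.

Lemma linN (U : X -> X) : linear U -> forall x, U (- x) = - U x.
Proof. by move=> hU x; rewrite -scaleN1r (linZ hU) scaleN1r. Qed.

Lemma opowB i n x : `|opow (T i) n x| <= B ^+ n * `|x|.
Proof. exact: opow_bound (ltW hB0) (hTB i) n x. Qed.

Lemma Z_add x y : Z x -> Z y -> Z (x + y).
Proof.
move=> hx hy i eps he.
have he2 : 0 < eps / 2 by rewrite divr_gt0 // ltr0n.
have [K1 h1] := hx i _ he2; have [K2 h2] := hy i _ he2.
exists (maxn K1 K2) => k hk.
rewrite (linD (opow_lin _ (hlin i))) [eps]splitr.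
apply: (le_lt_trans (ler_normD _ _)); apply: ltrD.
  by apply: h1; apply: leq_trans hk; apply: leq_maxl.
by apply: h2; apply: leq_trans hk; apply: leq_maxr.
Qed.

Lemma dense_near (x : X) r : 0 < r -> exists p, X0 p /\ `|x - p| < r.
Proof.
move=> hr; have hne : ball x r !=set0 by exists x; apply: ballxx.
have [p [hp1 hp2]] := hX0 hne (ball_open x r).
by exists p; split => //; rewrite -ball_normE in hp1.
Qed.

Definition dec3 (j : nat) : nat * nat * nat := odflt (0,0,0)%N (unpickle j).
Definition dec2 (m : nat) : nat * nat := odflt (0,0)%N (unpickle m).
Lemma dec3P q t r : dec3 (pickle (q,t,r)) = (q,t,r). Proof. by rewrite /dec3 pickleK. Qed.
Lemma dec2P a b : dec2 (pickle (a,b)) = (a,b). Proof. by rewrite /dec2 pickleK. Qed.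
Definition tgt (t : nat) : 'I_N -> X :=
  fun i => e (odflt [ffun=> 0%N] (unpickle t : option {ffun 'I_N -> nat}) i).
Definition gam (m : nat) : K := ((dec2 m).2.+1%:R)^-1.
Definition d0 (m : nat) : X := e (dec2 m).1.
Definition prec (j : nat) : K := ((dec3 j).2.+1%:R)^-1.
Definition qq j := (dec3 j).1.1.
Definition tt j := (dec3 j).1.2.

Lemma inv_gt0 n : 0 < (n.+1%:R : K)^-1. Proof. by rewrite invr_gt0 ltr0Sn. Qed.
Lemma inv_le1 n : (n.+1%:R : K)^-1 <= 1. Proof. by rewrite invf_le1 ?ltr0Sn // ler1n. Qed.

Lemma gam_gt0 m : 0 < gam m. Proof. exact: inv_gt0. Qed.
Lemma gam_le1 m : gam m <= 1. Proof. exact: inv_le1. Qed.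
Lemma prec_gt0 m : 0 < prec m. Proof. exact: inv_gt0. Qed.
Lemma prec_le1 m : prec m <= 1. Proof. exact: inv_le1. Qed.

Definition state := ((nat -> X) * nat * K)%type.
Definition Inv (s : state) := (forall m, Z (s.1.1 m)) /\ 0 < s.2 /\ s.2 <= 1.
Definition rho j (s : state) : K := s.2 * gam (qq j) / (2 ^+ j.+1 * B ^+ nk s.1.2).
Definition Rel j (s s' : state) :=
  [/\ (s.1.2 < s'.1.2)%N, s'.2 = s.2 * prec j,
      (forall m, m != qq j -> s'.1.1 m = s.1.1 m),
      `|s'.1.1 (qq j) - s.1.1 (qq j)| <= rho j s &
      (forall i, (forall m, (m < qq j)%N -> `|opow (T i) (nk s'.1.2) (s'.1.1 m)| < prec j) /\
        `|opow (T i) (nk s'.1.2) (s'.1.1 (qq j)) - tgt (tt j) i| < prec j)].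

Lemma step_ex j s : Inv s -> exists s', Inv s' /\ Rel j s s'.
Proof.
case: s => [[v kp] tau] [hv [ht0 ht1]] /=.
rewrite /Rel /rho /=.
set q := qq j; set y := tgt (tt j); set pr := prec j.
have hpr : 0 < pr by apply: prec_gt0.
have hpr1 : pr <= 1 by apply: prec_le1.
have hpr2 : 0 < pr / 2 by rewrite divr_gt0 // ltr0n.
have hrho : 0 < tau * gam q / (2 ^+ j.+1 * B ^+ nk kp).
  by rewrite divr_gt0 // mulr_gt0 // ?gam_gt0 ?exprn_gt0 ?hB0 ?ltr0n.
have [K1 hK1] : exists K1, forall m, m \in iota 0 q.+1 -> forall k, (K1 <= k)%N ->
    forall i, `|opow (T i) (nk k) (v m)| < pr / 2.
  apply: ev_seq => m _.
  have [K2 hK2] := @ev_seq _ (enum 'I_N)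
     (fun i k => `|opow (T i) (nk k) (v m)| < pr / 2) (fun i _ => hv m i _ hpr2).
  by exists K2 => k hk i; apply: hK2 => //; rewrite mem_enum.
have [dl [hdl hdl1 hdl2]] := minpos (divr_gt0 hrho (ltr0n K 2)) (divr_gt0 hpr (ltr0n K 4)).
have [k [hk [hS1 hS2]]] := @hii dl hdl (maxn K1 kp.+1) y (fun i => he0 _).
have [p [hp0 hp]] := dense_near (S k y) (divr_gt0 hdl (hBn (nk k))).
exists ((fun m => if m == q then v q + p else v m), k, tau * pr); split.
  split; last by split; [rewrite mulr_gt0 | rewrite mulr_ile1 // ltW].
  move=> m /=; case: ifP => _; last exact: hv.
  by apply: Z_add; [apply: hv | apply: hZ0].
have hdlB : dl / B ^+ nk k <= dl.
  by rewrite ler_pdivrMr ?hBn // ler_peMr ?hBn1 // ltW.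
have hp' : `|p| <= 2 * dl.
  have -> : p = S k y - (S k y - p) by rewrite opprB addrC subrK.
  apply: (le_trans (ler_normB _ _)); rewrite mulr2n mulrDl mul1r.
  by apply: lerD; apply: ltW => //; apply: (lt_le_trans hp).
split => /=.
- by apply: leq_trans hk; apply: leq_trans (leq_maxr _ _).
- by [].
- by move=> m /negbTE ->.
  rewrite eqxx addrAC subrr add0r (le_trans hp') // (le_trans (ler_wpM2l _ hdl1)) ?ler0n // mulrC divfK ?pnatr_eq0 //.
- move=> i; split.
  move=> m hm; rewrite (ltn_eqF hm).
  apply: (lt_le_trans (hK1 m _ k _ i)).
  + by rewrite mem_iota /= add0n ltnS ltnW.
  + by apply: leq_trans hk; apply: leq_maxl.
  + by rewrite ler_pdivrMr ?ltr0n // ler_peMr ?ler1n // ltW.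
  rewrite eqxx.
  have hL := opow_lin (nk k) (hlin i).
  have hTp : `|opow (T i) (nk k) p - y i| <= pr / 2.
    have -> : opow (T i) (nk k) p - y i =
      (opow (T i) (nk k) (S k y) - y i) + opow (T i) (nk k) (p - S k y).
      by rewrite (linD hL) (linN hL) [RHS]addrC addrA subrK.
    apply: (le_trans (ler_normD _ _)).
    apply: (@le_trans _ _ (dl + dl)); last first.
      apply: (le_trans (lerD hdl2 hdl2)); suff -> : pr / 4%:R + pr / 4%:R = pr / 2 by []; by field.
    apply: lerD; first exact: ltW (hS2 i).
    apply: (le_trans (opowB _ _ _)).
    rewrite -ler_pdivlMl ?hBn // mulrC distrC; exact: ltW.
  rewrite (linD hL) -addrA [pr]splitr.
  apply: (le_lt_trans (ler_normD _ _)); apply: ltr_leD => //.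
  apply: (hK1 q _ k _ i); first by rewrite mem_iota /= add0n ltnS.
  by apply: leq_trans hk; apply: leq_maxl.
Qed.

Lemma sub3 (a b c t : X) : a - t = (a - b) + (b - c) + (c - t).
Proof. by rewrite [(a - b) + _]addrA subrK [(a - c) + _]addrA subrK. Qed.

Lemma linB (U : X -> X) : linear U -> forall x y, U (x - y) = U x - U y.
Proof. by move=> hU x y; rewrite (linD hU) (linN hU). Qed.

Lemma step_ex' j s : exists s', Inv s -> Inv s' /\ Rel j s s'.
Proof.
case: (pselect (Inv s)) => h; last by exists s.
by have [s' hs'] := step_ex j h; exists s'.
Qed.

Definition nxt j s : state := proj1_sig (cid (step_ex' j s)).
Definition s0 : state := (d0, 0%N, 1).
Fixpoint st j : state := if j is j'.+1 then nxt j' (st j') else s0.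

Lemma st_inv j : Inv (st j).
Proof.
elim: j => [|j IH].
  split => /=; first by move=> m; apply: hZ0; apply: he0.
  by rewrite ltr01 lexx.
exact: (proj1 (proj2_sig (cid (step_ex' j (st j))) IH)).
Qed.

Lemma st_rel j : Rel j (st j) (st j.+1).
Proof. exact: (proj2 (proj2_sig (cid (step_ex' j (st j))) (st_inv j))). Qed.

Definition V j := (st j).1.1.
Definition kk j := (st j).1.2.
Definition ta j := (st j).2.

Hypothesis hnk : forall k, (nk k < nk k.+1)%N.

Lemma nk_mono a b : (a <= b)%N -> (nk a <= nk b)%N.
Proof.
move=> /subnKC <-; elim: (b - a)%N => [|d IH]; first by rewrite addn0.
by rewrite addnS (leq_trans IH) // ltnW.
Qed.

Lemma kk_mono a b : (a <= b)%N -> (kk a <= kk b)%N.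
Proof.
move=> /subnKC <-; elim: (b - a)%N => [|d IH]; first by rewrite addn0.
have [h _ _ _ _] := st_rel (a + d); rewrite addnS (leq_trans IH) // ltnW //.
Qed.

Lemma ta_ge0 j : 0 <= ta j. Proof. by have [_ [h _]] := st_inv j; apply: ltW. Qed.
Lemma ta_le1 j : ta j <= 1. Proof. by have [_ [_ h]] := st_inv j. Qed.

Lemma ta_le j J : (j < J)%N -> ta J <= prec j.
Proof.
move=> /subnKC <-; elim: (J - j.+1)%N => [|d IH].
  have [_ h _ _ _] := st_rel j; rewrite addn0 /ta h.
  by rewrite ler_piMl ?ta_le1 // ltW // prec_gt0.
have [_ h _ _ _] := st_rel (j.+1 + d); rewrite addnS /ta h.
apply: le_trans IH; rewrite ler_piMr ?ta_ge0 ?prec_le1 //.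
Qed.

Lemma pert J m : `|V J.+1 m - V J m| <= ta J * gam m / (2 ^+ J.+1 * B ^+ nk (kk J)).
Proof.
have [_ _ h1 h2 _] := st_rel J.
case: (eqVneq m (qq J)) => [->|hm]; first exact: h2.
rewrite /V h1 // subrr normr0 divr_ge0 // ?mulr_ge0 ?ta_ge0 ?ltW ?gam_gt0 //.
exact: hBn.
Qed.

Lemma geom (w : nat -> X) (c : K) j0 : 0 <= c ->
  (forall J, (j0 <= J)%N -> `|w J.+1 - w J| <= c / 2 ^+ J.+1) ->
  forall J, (j0 <= J)%N -> `|w J - w j0| <= c * (2 ^+ j0)^-1.
Proof.
move=> hc hw.
have H : forall d, `|w (j0 + d)%N - w j0| <= c * ((2 ^+ j0)^-1 - (2 ^+ (j0 + d))^-1).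
  elim=> [|d IH]; first by rewrite addn0 !subrr normr0 mulr0.
  have -> : w (j0 + d.+1)%N - w j0 = (w (j0 + d).+1 - w (j0 + d)%N) + (w (j0 + d)%N - w j0).
    by rewrite addnS addrA subrK.
  apply: (le_trans (ler_normD _ _)).
  apply: (le_trans (lerD (hw _ (leq_addr _ _)) IH)).
  rewrite addnS; set n := (j0 + d)%N.
  have h2 : (2 : K) ^+ n != 0 by rewrite expf_neq0 // pnatr_eq0.
  suff -> : c / 2 ^+ n.+1 + c * ((2 ^+ j0)^-1 - (2 ^+ n)^-1) =
            c * ((2 ^+ j0)^-1 - (2 ^+ n.+1)^-1) by [].
  by rewrite exprS; field; rewrite h2 expf_neq0 // pnatr_eq0.
move=> J /subnKC <-; apply: (le_trans (H _)); rewrite ler_wpM2l //.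
by rewrite gerBl invr_ge0 exprn_ge0 // ler0n.
Qed.

Hypothesis harch : archK K.

Lemma pert2 J m : `|V J.+1 m - V J m| <= gam m / 2 ^+ J.+1.
Proof.
apply: (le_trans (pert J m)).
have h2 : 0 < (2 : K) ^+ J.+1 by rewrite exprn_gt0 ?ltr0n.
have hg := gam_gt0 m.
apply: ler_pM.
- by rewrite mulr_ge0 ?ta_ge0 // ltW.
- by rewrite invr_ge0 mulr_ge0 // ltW // hBn.
- by rewrite ler_piMl ?ta_le1 // ltW.
- rewrite lef_pV2 ?posrE ?mulr_gt0 ?hBn //.
  by rewrite ler_peMr ?hBn1 // ltW.
Qed.

Lemma Vcauchy m j J : (j <= J)%N -> `|V J m - V j m| <= (2 ^+ j)^-1.
Proof.
move=> hJ.
have := @geom (fun J => V J m) (gam m) j (ltW (gam_gt0 m)) (fun J _ => pert2 J m) J hJ.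
move/le_trans; apply; rewrite ler_piMl ?gam_le1 // invr_ge0 exprn_ge0 // ler0n.
Qed.

Definition u m : X := lim ((fun J => V J m) @ \oo).

Lemma u_cvg m : forall eps, 0 < eps -> exists J0, forall J, (J0 <= J)%N -> `|u m - V J m| < eps.
Proof.
have hc : cauchy_ex ((fun J => V J m) @ \oo).
  move=> eps he; have [j hj] := pow2_small harch he.
  exists (V j m); exists j => // J /= hJ.
  rewrite -ball_normE /= distrC; exact: le_lt_trans (Vcauchy m hJ) hj.
have hcv : cvg ((fun J => V J m) @ \oo) by apply: cauchy_cvg; apply: cauchy_exP.
move=> eps he; have [J0 _ h] := (cvgrPdist_lt _ _).1 hcv eps he.
by exists J0 => J hJ; exact: h J hJ.
Qed.

Lemma u_d0 m eps : 0 < eps -> `|u m - d0 m| < gam m + eps.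
Proof.
move=> he; have [J0 h] := u_cvg m he.
have -> : u m - d0 m = (u m - V J0 m) + (V J0 m - V 0 m) by rewrite addrA subrK.
apply: (le_lt_trans (ler_normD _ _)); rewrite addrC; apply: ler_ltD; last exact: h.
have := @geom (fun J => V J m) (gam m) 0 (ltW (gam_gt0 m)) (fun J _ => pert2 J m) J0 (leq0n _).
by rewrite expr0 invr1 mulr1.
Qed.

Lemma stage j i m (t : X) :
  `|opow (T i) (nk (kk j.+1)) (V j.+1 m) - t| < prec j ->
  `|opow (T i) (nk (kk j.+1)) (u m) - t| < prec j *+ 3.
Proof.
move=> ht; set n := nk (kk j.+1); have hL := opow_lin n (hlin i).
have hp := prec_gt0 j.
have hw : forall J, (j.+1 <= J)%N ->
    `|opow (T i) n (V J m) - opow (T i) n (V j.+1 m)| <= prec j.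
  have hg : forall J', (j.+1 <= J')%N ->
      `|opow (T i) n (V J'.+1 m) - opow (T i) n (V J' m)| <= prec j / 2 ^+ J'.+1.
    move=> J' hJ'; rewrite -(linB hL); apply: (le_trans (opowB _ _ _)).
    apply: (le_trans (ler_wpM2l (ltW (hBn _)) (pert J' m))).
    set M := nk (kk J').
    have hnM : (n <= M)%N by apply: nk_mono; apply: kk_mono; exact: hJ'.
    have hfr : 0 <= ta J' * gam m / (2 ^+ J'.+1 * B ^+ M).
      apply: divr_ge0; first by apply: mulr_ge0; [exact: ta_ge0 | exact: ltW (gam_gt0 m)].
      by apply: ltW; apply: mulr_gt0; [by rewrite exprn_gt0 // ltr0n | exact: hBn].
    apply: (le_trans (ler_wpM2r hfr (ler_weXn2l hB1 hnM))).
    have hBM : B ^+ M != 0 by rewrite gt_eqF // hBn.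
    have h2 : (2 : K) ^+ J'.+1 != 0 by rewrite expf_neq0 // pnatr_eq0.
    have -> : B ^+ M * (ta J' * gam m / (2 ^+ J'.+1 * B ^+ M)) = ta J' * gam m / 2 ^+ J'.+1.
      by field; rewrite hBM h2.
    apply: ler_wpM2r; first by rewrite invr_ge0 exprn_ge0 // ler0n.
    apply: (le_trans (ler_piMr (ta_ge0 _) (gam_le1 _))); apply: ta_le.
    exact: hJ'.
  move=> J hJ.
  have := @geom (fun J => opow (T i) n (V J m)) (prec j) j.+1 (ltW hp) hg J hJ.
  move/le_trans; apply; rewrite ler_piMr ?(ltW hp) // invf_le1 ?exprn_gt0 ?ltr0n //.
  by rewrite exprn_ege1 // ler1n.
have [J0 hJ0] := u_cvg m (divr_gt0 hp (hBn n)).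
set J := maxn J0 j.+1.
have -> : opow (T i) n (u m) - t = opow (T i) n (u m - V J m) +
   (opow (T i) n (V J m) - opow (T i) n (V j.+1 m)) + (opow (T i) n (V j.+1 m) - t).
  by rewrite (linB hL) -sub3.
rewrite !mulrS mulr0n addr0 addrA.
apply: (le_lt_trans (ler_normD _ _)); apply: ler_ltD => //.
apply: (le_trans (ler_normD _ _)); apply: lerD; last by apply: hw; apply: leq_maxr.
apply: (le_trans (opowB _ _ _)); rewrite -ler_pdivlMl ?hBn // mulrC.
by apply: ltW; apply: hJ0; apply: leq_maxl.
Qed.

Hypothesis hed : forall z eps, 0 < eps -> exists a, `|z - e a| < eps.

Lemma tgt_dense (w : 'I_N -> X) dl : 0 < dl -> exists t, forall i, `|tgt t i - w i| < dl.
Proof.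
move=> hd; have [f hf] := boolp.choice (fun i => hed (w i) hd).
exists (pickle [ffun i => f i]) => i.
by rewrite /tgt pickleK /= ffunE distrC.
Qed.

Lemma core q (a : nat -> K) : a q != 0 -> forall (w : 'I_N -> X) eps, 0 < eps ->
  exists n, forall i, `|opow (T i) n (\sum_(m < q.+1) a m *: u m) - w i| < eps.
Proof.
move=> haq w eps he.
set al := a q.
have hal : 0 < `|al| by rewrite normr_gt0.
have he2 : 0 < eps / 2 by rewrite divr_gt0 // ltr0n.
have [t ht] := tgt_dense (fun i => al^-1 *: w i) (divr_gt0 he2 hal).
set A := \sum_(m < q) `|a m|.
have hA : 0 <= A by apply: sumr_ge0 => m _; apply: normr_ge0.
have hA1 : 0 < (A + `|al|) *+ 3 by rewrite pmulrn_lgt0 // ltr_wpDl.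
have [r hr] := harch (divr_gt0 he2 hA1).
set j := pickle (q, t, r).
have hq : qq j = q by rewrite /qq dec3P.
have htt : tt j = t by rewrite /tt dec3P.
have hpr : prec j = (r.+1%:R)^-1 by rewrite /prec dec3P.
exists (nk (kk j.+1)) => i.
have [_ _ _ _ h5] := st_rel j; have [h5a h5b] := h5 i.
rewrite hq htt in h5a h5b.
have hL := opow_lin (nk (kk j.+1)) (hlin i).
rewrite opow_sum // big_ord_recr /=.
set N0 := nk (kk j.+1).
have -> : \sum_(m < q) a m *: opow (T i) N0 (u m) + al *: opow (T i) N0 (u q) - w i =
   \sum_(m < q) a m *: opow (T i) N0 (u m) + al *: (opow (T i) N0 (u q) - tgt t i)
   + al *: (tgt t i - al^-1 *: w i).
  by rewrite -[RHS]addrA -scalerDr [_ - tgt t i + _]addrA subrK scalerBr scalerA mulfV // scale1r addrA.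
rewrite [eps]splitr; apply: (le_lt_trans (ler_normD _ _)); apply: ler_ltD; last first.
  by rewrite normrZ -ltr_pdivlMl // mulrC; apply: ht.
apply: (le_trans (ler_normD _ _)).
have hs : `|\sum_(m < q) a m *: opow (T i) N0 (u m)| <= A * prec j *+ 3.
  apply: (le_trans (ler_norm_sum _ _ _)).
  rewrite /A mulr_suml -sumrMnl; apply: ler_sum => m _.
  rewrite normrZ -mulrnAr ler_wpM2l //; apply: ltW.
  by have := stage (t := 0) (i := i) (m := m) (j := j); rewrite !subr0; apply; apply: h5a.
have hs2 : `|al *: (opow (T i) N0 (u q) - tgt t i)| <= `|al| * prec j *+ 3.
  by rewrite normrZ -mulrnAr ler_wpM2l //; apply: ltW; apply: stage.
apply: (le_trans (lerD hs hs2)).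
rewrite -mulrnDl -mulrDl -mulrnAl mulrC -ler_pdivlMr //.
rewrite hpr; exact: ltW.
Qed.

Definition Msp : set X := fun x => exists p (a : nat -> K), x = \sum_(m < p) a m *: u m.

Lemma widen_sum p p' (a : nat -> K) : (p <= p')%N ->
  \sum_(m < p) a m *: u m = \sum_(m < p') (if (m < p)%N then a m else 0) *: u m.
Proof.
move=> hp; rewrite (big_ord_widen p' (fun m => a m *: u m) hp) big_mkcond /=.
by apply: eq_bigr => m _; case: ifP => //; rewrite scale0r.
Qed.

Lemma Msp_sub : linear_subspace Msp.
Proof.
split; first by exists 0%N, (fun _ => 0); rewrite big_ord0.
split.
  move=> x y [p1 [a1 ->]] [p2 [a2 ->]].
  exists (p1 + p2)%N, (fun m => (if (m < p1)%N then a1 m else 0) + (if (m < p2)%N then a2 m else 0)).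
  rewrite (widen_sum _ (leq_addr p2 p1)) (widen_sum _ (leq_addl p1 p2)) -big_split /=.
  by apply: eq_bigr => m _; rewrite scalerDl.
move=> c x [p [a ->]]; exists p, (fun m => c * a m).
by rewrite scaler_sumr; apply: eq_bigr => m _; rewrite scalerA.
Qed.

Lemma Msp_u m : Msp (u m).
Proof.
exists m.+1, (fun l => if l == m then 1 else 0).
rewrite big_ord_recr /= eqxx scale1r big1 ?add0r // => l _.
by rewrite ltn_eqF // scale0r.
Qed.

Lemma reduce p (a : nat -> K) : \sum_(m < p) a m *: u m != 0 ->
  exists q, a q != 0 /\ \sum_(m < p) a m *: u m = \sum_(m < q.+1) a m *: u m.
Proof.
elim: p => [|p IH]; first by rewrite big_ord0 eqxx.
rewrite big_ord_recr /=; case: (eqVneq (a p) 0) => [hp|hp].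
  by rewrite hp scale0r addr0.
by move=> _; exists p; rewrite big_ord_recr.
Qed.

Lemma Msp_hyp x : Msp x -> x != 0 -> d_hypercyclic T x.
Proof.
move=> [p [a ->]] /reduce [q [haq ->]].
set y := \sum_(m < q.+1) a m *: u m.
have hc := core haq.
move=> O [f hf] hO.
have hnb : nbhs f O by rewrite openE in hO; exact: hO f hf.
have [nn hnn] := boolp.choice (fun r => hc f _ (inv_gt0 r)).
pose g := fun r => ((fun i => opow (T i) (nn r) y) : {ptws 'I_N -> X}).
have hcv : {ptws, g @ \oo --> f}.
  apply/(pointwise_cvgP f _) => t; apply/cvgrPdist_lt => eps he.
  have [n0 hn0] := harch he; exists n0 => // r /= hr.
  rewrite distrC; apply: lt_trans (hnn r t) _; apply: le_lt_trans hn0.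
  by rewrite lef_pV2 ?posrE ?ltr0Sn // ler_nat ltnS.
have [r0 _ h] := hcv O hnb.
exists (g r0); split; first exact: h r0 (leqnn r0).
by exists (nn r0).
Qed.

Lemma Msp_dense : dense Msp.
Proof.
move=> O [z hz] hO.
have : nbhs z O by rewrite openE in hO; apply: hO.
move/nbhs_ballP => [r hr hball].
have hr3 : 0 < r / 3%:R by rewrite divr_gt0 // ltr0n.
have [a ha] := hed z hr3; have [b hb] := harch hr3.
set m := pickle (a, b).
have hd : d0 m = e a by rewrite /d0 dec2P.
have hg : gam m = (b.+1%:R)^-1 by rewrite /gam dec2P.
exists (u m); split; last exact: Msp_u.
apply: hball; rewrite -ball_normE /=.
have := u_d0 m hr3; rewrite hd hg distrC => hu.
have -> : z - u m = (z - e a) + (e a - u m) by rewrite addrA subrK.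
apply: (le_lt_trans (ler_normD _ _)).
have -> : r = r / 3%:R + (r / 3%:R + r / 3%:R) by field.
apply: ltrD => //; apply: (lt_le_trans hu); apply: lerD => //; exact: ltW.
Qed.

End Construction.


Lemma open_ball_in (K : numFieldType) (X : normedModType K) (O : set X) z :
  open O -> O z -> exists2 r : K, 0 < r & forall y, `|z - y| < r -> O y.
Proof.
move=> hO hz; have : nbhs z O by rewrite openE in hO; apply: hO.
move/nbhs_ballP => [r hr hball]; exists r => // y hy; apply: hball.
by rewrite -ball_normE.
Qed.

Lemma dense_pick (K : numFieldType) (X : normedModType K) (D : set X) (O : set X) :
  dense D -> open O -> O !=set0 -> exists x, O x /\ D x.
Proof. by move=> hD hO hne; have [x [h1 h2]] := hD O hne hO; exists x. Qed.

Lemma minpos_fin (K : numFieldType) (A : eqType) (s : seq A) (f : A -> K) :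
  (forall a, a \in s -> 0 < f a) -> exists2 c : K, 0 < c & forall a, a \in s -> c <= f a.
Proof.
elim: s => [|b s IH] h; first by exists 1.
have [c hc hcs] : exists2 c : K, 0 < c & forall a, a \in s -> c <= f a.
  by apply: IH => a ha; apply: h; rewrite inE ha orbT.
have [d [hd hd1 hd2]] := minpos hc (h b (mem_head _ _)).
exists d => // a; rewrite inE => /orP[/eqP -> //| ha].
exact: le_trans hd1 (hcs a ha).
Qed.

Lemma sdbcp (K : numFieldType) (X : normedModType K) (N : nat) (T : 'I_N -> X -> X)
  (nk : nat -> nat) (X0 : set X) (S : nat -> ('I_N -> X) -> X) :
  (forall k, (0 < nk k)%N) -> dense X0 ->
  (forall x, X0 x -> forall i : 'I_N,
      (fun k => opow (T i) (nk k) x) @ \oo --> (0 : X)) ->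
  (forall (eps : K), 0 < eps -> forall K0 : nat,
     forall xs : 'I_N -> X, (forall i, X0 (xs i)) ->
     exists k : nat, (K0 <= k)%N /\
       `|S k xs| < eps /\
       (forall i : 'I_N, `|opow (T i) (nk k) (S k xs) - xs i| < eps)) ->
  strong_disjoint_blowup_collapse T.
Proof.
move=> hnk0 hX0 hi hii L _ W V U hW _ hW0 hV hU.
have [r hr hWr] := open_ball_in hW hW0.
have hxr' : forall i, exists p : X * K,
    [/\ X0 p.1, 0 < p.2 & forall y, `|p.1 - y| < p.2 -> U i y].
  move=> i; have [hUo hUne] := hU i.
  have [x [hx1 hx2]] := dense_pick hX0 hUo hUne.
  by have [ri hri hb] := open_ball_in hUo hx1; exists (x, ri).
have [xr hxr] := boolp.choice hxr'.
have hv' : forall l, exists x : X, V l x /\ X0 x.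
  move=> l; have [hVo hVne] := hV l; exact: dense_pick hX0 hVo hVne.
have [v hv] := boolp.choice hv'.
have hx0 : forall i, X0 (xr i).1 by move=> i; case: (hxr i).
have [c1 hc1 hcs] := @minpos_fin K _ (enum 'I_N) (fun i => (xr i).2)
  (fun i _ => let: And3 _ h _ := hxr i in h).
have [eps [heps he1 he2]] := minpos hc1 hr.
have [K1 hK1] : exists K1, forall l, l \in enum 'I_L -> forall k, (K1 <= k)%N ->
    forall i, `|opow (T i) (nk k) (v l)| < r.
  apply: ev_seq => l _.
  have [K2 hK2] := @ev_seq _ (enum 'I_N) (fun i k => `|opow (T i) (nk k) (v l)| < r)
    (fun i _ => let: ex_intro2 K3 _ h := (cvgr0Pnorm_lt _).1 (hi (v l) (hv l).2 i) r hr
               in ex_intro _ K3 h).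
  by exists K2 => k hk i; apply: hK2 => //; rewrite mem_enum.
have [k [hk [hS1 hS2]]] := hii eps heps K1 (fun i => (xr i).1) hx0.
exists (nk k); split; first exact: hnk0.
split.
  exists (S k (fun i => (xr i).1)); split.
    by apply: hWr; rewrite sub0r normrN; exact: lt_le_trans hS1 he2.
  move=> i; case: (hxr i) => _ _ hb; apply: hb; rewrite distrC.
  apply: lt_le_trans (hS2 i) _; apply: le_trans he1 _; apply: hcs; exact: mem_enum.
move=> l; exists (v l); split; first exact: (hv l).1.
move=> i; apply: hWr; rewrite sub0r normrN; apply: hK1 => //; exact: mem_enum.
Qed.

Lemma main_over (K : numFieldType) : archK K -> theorem2p2_over K.
Proof.
move=> harch X [D [hDc hDd]] _ N T _ hbd nk X0 S hnk0 hnk hX0 hi hii.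
split; first exact: sdbcp hnk0 hX0 hi hii.
have hM' : forall i, exists M : K, forall x, `|T i x| <= M * `|x|.
  by move=> i; exact: (hbd i).2.
have [Mf hMf] := boolp.choice hM'.
pose B := 1 + \sum_i `|Mf i|.
have hB1 : 1 <= B by rewrite lerDl sumr_ge0 // => i _; apply: normr_ge0.
have hTB : forall i x, `|T i x| <= B * `|x|.
  move=> i x; have h := hMf i x.
  have hge : 0 <= Mf i * `|x| := le_trans (normr_ge0 _) h.
  apply: (le_trans h); rewrite -(ger0_norm hge) normrM normr_id ler_wpM2r //.
  rewrite /B (bigD1 i) //= addrCA lerDl addr_ge0 // sumr_ge0 // => j _.
have hlin : forall i, linear (T i) by move=> i; exact: (hbd i).1.
have hZ0 : forall x, X0 x -> Z T nk x.
  move=> x hx i eps he.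
  by have [K0 _ h] := (cvgr0Pnorm_lt _).1 (hi x hx i) eps he; exists K0.
have /countable_injP [g hg] := hDc.
pose ee n := xget (0 : X) [set x | D x /\ g x = n].
have hee : forall d, D d -> ee (g d) = d.
  move=> d hd; have : [set x | D x /\ g x = g d] (ee (g d)).
    by apply: xgetPex; exists d.
  by case=> h1 h2; apply: hg => //; exact: mem_set.
have he' : forall m : nat, exists x, X0 x /\
    `|ee (dec2 m).1 - x| < ((dec2 m).2.+1%:R)^-1.
  move=> m; have hne : ball (ee (dec2 m).1) ((dec2 m).2.+1%:R)^-1 !=set0.
    by exists (ee (dec2 m).1); apply: ballxx; apply: inv_gt0.
  have [x [h1 h2]] := hX0 _ hne (ball_open _ _).
  by exists x; split => //; rewrite -ball_normE in h1.
have [e he] := boolp.choice he'.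
have he0 : forall a, X0 (e a) by move=> a; case: (he a).
have hed : forall z eps, 0 < eps -> exists a, `|z - e a| < eps.
  move=> z eps hep; have hep2 : 0 < eps / 2 by rewrite divr_gt0 // ltr0n.
  have hne : ball z (eps / 2) !=set0 by exists z; apply: ballxx.
  have [d [hd1 hd2]] := hDd _ hne (ball_open _ _).
  rewrite -ball_normE /= in hd1.
  have [b hb] := harch _ hep2.
  exists (pickle (g d, b)).
  have [_ hh] := he (pickle (g d, b)); rewrite dec2P /= hee // in hh.
  rewrite [eps]splitr; have -> : z - e (pickle (g d, b)) = (z - d) + (d - e (pickle (g d, b))).
    by rewrite addrA subrK.
  apply: (le_lt_trans (ler_normD _ _)); apply: ltrD => //; exact: lt_trans hh hb.
exists (Msp hB1 hTB hlin hX0 hZ0 hii he0).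
split; first exact: Msp_sub.
split; first exact: (Msp_dense hB1 hTB hlin hX0 hZ0 hii he0 harch hed).
by move=> x hx hx0; exact: (Msp_hyp hnk harch hed hx hx0).
Qed.

Theorem theorem2p2 (R : realType) :
  theorem2p2_over R /\ theorem2p2_over (R[i])%C.
Proof. split; apply: main_over; [exact: arch_real | exact: arch_cplx]. Qed.
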